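(* Consider a repeated $N$-player game with profit parameter $r>1$ in which, in each round, each player chooses cooperation ($c$) or defection ($d$); if $b$ players cooperate in a round, each cooperator receives $\frac{rb}{N}$ and each defector receives $\frac{rb}{N}+1$. Let a ZD alliance $\mathcal{A}$ consist of $n^{\mathcal{A}}$ players that always take the same action, and let the remaining $N-n^{\mathcal{A}}$ players be the outsiders. Suppose the alliance uses a zero-determinant strategy enforcing the linear relation $\pi^{-\mathcal{A}}=\chi\,\pi^{\mathcal{A}}+(1-\chi)\,l$ with $\chi=0$, where $\pi^{\mathcal{A}}$ and $\pi^{-\mathcal{A}}$ are the expected (stationary) per-member utilities of the alliance and of the outsiders. If $\frac{r-1}{2r}N<n^{\mathcal{A}}\le\frac{r-1}{r}N$, then the expected utility of the outsiders satisfies $$\frac{r\,(N-n^{\mathcal{A}})}{N}\le \pi^{-\mathcal{A}}\le \frac{r\,n^{\mathcal{A}}}{N}+1 .$$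
   Context: Per-outcome average payoffs: when the alliance plays $s\in\{c,d\}$ and there are $b$ cooperators in total, an alliance member gets $g^{\mathcal{A}}_{c,b}=\frac{rb}{N}$ ($n^{\mathcal{A}}\le b\le N$) or $g^{\mathcal{A}}_{d,b}=\frac{rb}{N}+1$ ($0\le b\le N-n^{\mathcal{A}}$), and the average outsider payoff is $g^{-\mathcal{A}}_{c,b}=\frac{(b-n^{\mathcal{A}})\frac{rb}{N}+(N-b)(\frac{rb}{N}+1)}{N-n^{\mathcal{A}}}$ ($n^{\mathcal{A}}\le b\le N$) or $g^{-\mathcal{A}}_{d,b}=\frac{b\frac{rb}{N}+(N-n^{\mathcal{A}}-b)(\frac{rb}{N}+1)}{N-n^{\mathcal{A}}}$ ($0\le b\le N-n^{\mathcal{A}}$). The game is sequential: the alliance members are among the first movers (leaders), whose cooperation probabilities depend on the previous round's outcome, while followers condition on the leaders' current moves. A zero-determinant strategy of the alliance is a strategy vector proportional to $\chi(\mathbf{g}^{\mathcal{A}}-l\mathbf{1})-(\mathbf{g}^{-\mathcal{A}}-l\mathbf{1})$, which forces $\pi^{-\mathcal{A}}=\chi\pi^{\mathcal{A}}+(1-\chi)l$ for the stationary distribution of the induced Markov chain; with $\chi=0$ this sets $\pi^{-\mathcal{A}}=l$. *)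

(* Defs.v *)
From HB Require Import structures.
From mathcomp Require Import all_boot all_order all_algebra.
Set Implicit Arguments. Unset Strict Implicit. Unset Printing Implicit Defensive.
Import Order.TTheory GRing.Theory Num.Theory.
Local Open Scope ring_scope.

(* An outcome of one round: the common action of the alliance
   (true = c, false = d) and the total number b of cooperators, 0 <= b <= N. *)
Definition state (N : nat) := (bool * 'I_N.+1)%type.

(* Outcomes compatible with an alliance of nA members all playing the same
   action: if the alliance plays c then nA <= b <= N, else 0 <= b <= N - nA. *)
Definition feasible (N nA : nat) (x : state N) : bool :=
  if x.1 then (nA <= x.2)%N else (x.2 <= N - nA)%N.

Section Payoffs.
Variables (R : realFieldType) (r : R) (N nA : nat).

Definition gA (x : state N) : R :=
  let b := (nat_of_ord x.2)%:R in
  if x.1 then r * b / N%:R else r * b / N%:R + 1.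

(* average payoff of the outsiders in outcome x = (s, b) *)
Definition gO (x : state N) : R :=
  let b := (nat_of_ord x.2)%:R in
  if x.1 then
    ((b - nA%:R) * (r * b / N%:R) + (N%:R - b) * (r * b / N%:R + 1))
      / (N%:R - nA%:R)
  else
    (b * (r * b / N%:R) + (N%:R - nA%:R - b) * (r * b / N%:R + 1))
      / (N%:R - nA%:R).

(* the "repeat" strategy: cooperate iff the alliance cooperated last round *)
Definition prep (x : state N) : R := if x.1 then 1 else 0.

(* p : cooperation probability of the alliance as a function of the previous
   outcome. *)
Definition zd_strategy (chi l : R) (p : state N -> R) : Prop :=
  exists phi : R, phi != 0 /\
    forall x, feasible nA x ->
      p x - prep x = phi * (chi * (gA x - l) - (gO x - l)).

(* M is a Markov chain on the outcomes of the repeated game in which the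
   alliance (a group of leaders) cooperates in the next round with
   probability p(previous outcome) (followers/other players arbitrary). *)
Definition game_chain (p : state N -> R) (M : state N -> state N -> R) : Prop :=
  [/\ forall x y, 0 <= M x y,
      forall x, \sum_y M x y = 1,
      forall x y, ~~ feasible nA y -> M x y = 0 &
      forall x, feasible nA x -> \sum_(y | y.1) M x y = p x].

Definition stationary (M : state N -> state N -> R) (v : state N -> R) : Prop :=
  [/\ forall x, 0 <= v x, \sum_x v x = 1 &
      forall y, \sum_x v x * M x y = v y].

Definition piA (v : state N -> R) : R := \sum_x v x * gA x.
Definition piO (v : state N -> R) : R := \sum_x v x * gO x.

End Payoffs.

(* Main.v *)
Require Import Defs.
From HB Require Import structures.
From mathcomp Require Import all_boot all_order all_algebra.
From mathcomp Require Import ring lra.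
Import Order.TTheory GRing.Theory Num.Theory.
Local Open Scope ring_scope.

Theorem theorem2 (R : realFieldType) (r : R) (N nA : nat)
  (p : state N -> R) (l : R)
  (M : state N -> state N -> R) (v : state N -> R) :
  1 < r ->
  (r - 1) / (2 * r) * N%:R < nA%:R ->
  nA%:R <= (r - 1) / r * N%:R ->
  (forall x, 0 <= p x <= 1) ->
  @zd_strategy R r N nA 0 l p ->
  @game_chain R N nA p M ->
  @stationary R N M v ->
  r * (N%:R - nA%:R) / N%:R <= @piO R r N nA v <= r * nA%:R / N%:R + 1.
Proof.
move=> r1 hlo hhi p01 [phi [phi0 Hz]] [M0 M1 Minf Mp] [v0 v1 vst].
have r0 : 0 < r by lra.
have N0 : (0 < N)%N.
  rewrite lt0n; apply/negP => /eqP hN.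
  move: hlo hhi; rewrite hN mulr0 => hlo hhi; lra.
have nAN : (nA < N)%N.
  rewrite -(ltr_nat R).
  apply: (le_lt_trans hhi).
  have NR : 0 < N%:R :> R by rewrite ltr0n.
  have q : (r - 1) / r < 1 by rewrite ltr_pdivrMr // mul1r; lra.
  move: q NR; set t := (r - 1) / r; set n := (N%:R : R) => q NR; nra.
have NR : N%:R != 0 :> R by rewrite pnatr_eq0 -lt0n.
have NAR : N%:R - nA%:R != 0 :> R.
  by rewrite subr_eq0 eqr_nat neq_ltn nAN orbT.
have vinf : forall y, ~~ feasible nA y -> v y = 0.
  move=> y hy; rewrite -vst big1 // => x _; by rewrite Minf // mulr0.
have key1 : \sum_x v x * p x = \sum_x v x * @prep R N x.
  transitivity (\sum_x v x * \sum_(y | y.1) M x y).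
    apply: eq_bigr => x _.
    case: (boolP (feasible nA x)) => hx; first by rewrite Mp.
    by rewrite vinf // !mul0r.
  under eq_bigr do rewrite mulr_sumr.
  rewrite exchange_big /=.
  under eq_bigr do rewrite vst.
  rewrite big_mkcond /=; apply: eq_bigr => x _.
  by rewrite /prep; case: x.1; rewrite ?mulr1 ?mulr0.
have key2 : \sum_x v x * (p x - @prep R N x) = phi * (l - piO r nA v).
  transitivity (\sum_x phi * (v x * l - v x * @gO R r N nA x)).
    apply: eq_bigr => x _.
    case: (boolP (feasible nA x)) => hx; first by rewrite Hz //; ring.
    by rewrite vinf // !mul0r subrr mulr0.
  by rewrite -mulr_sumr sumrB -mulr_suml v1 mul1r.
have piOl : piO r nA v = l.
  move: key2; rewrite (eq_bigr (fun x => v x * p x - v x * @prep R N x)).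
    rewrite sumrB key1 subrr => /esym /eqP; rewrite mulf_eq0 (negbTE phi0) /=.
    by rewrite subr_eq0 => /eqP.
  by move=> x _; rewrite mulrBr.
rewrite piOl.
have inK : forall k, (k <= N)%N -> nat_of_ord (inord k : 'I_N.+1) = k.
  by move=> k hk; rewrite inordK // ltnS.
set xA : state N := (true, inord nA).
set xC : state N := (true, inord N).
set xD : state N := (false, inord 0).
set xB : state N := (false, inord (N - nA)).
have fA : feasible nA xA by rewrite /feasible /= inK // ltnW.
have fC : feasible nA xC by rewrite /feasible /= inK // ltnW.
have fD : feasible nA xD by rewrite /feasible /= inK.
have fB : feasible nA xB by rewrite /feasible /= inK // leq_subr.
have gA' : gO r nA xA = r * nA%:R / N%:R + 1.
  rewrite /gO /= inK ?(ltnW nAN) //; field; by apply/andP.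
have gC' : gO r nA xC = r.
  rewrite /gO /= inK //; field; by apply/andP.
have gD' : gO r nA xD = 1.
  rewrite /gO /= inK //; field; by apply/andP.
have gB' : gO r nA xB = r * (N%:R - nA%:R) / N%:R.
  rewrite /gO /= inK ?leq_subr // natrB ?(ltnW nAN) //; field; by apply/andP.
have eA := Hz _ fA; have eC := Hz _ fC; have eD := Hz _ fD; have eB := Hz _ fB.
rewrite gA' /prep /= mul0r sub0r opprB in eA.
rewrite gC' /prep /= mul0r sub0r opprB in eC.
rewrite gD' /prep /= mul0r sub0r opprB subr0 in eD.
rewrite gB' /prep /= mul0r sub0r opprB subr0 in eB.
have := p01 xA; have := p01 xC; have := p01 xD; have := p01 xB.
set A := r * nA%:R / N%:R + 1 in eA *.
set B := r * (N%:R - nA%:R) / N%:R in eB *.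
move: eA eB eC eD.
set a := phi * (l - A); set b := phi * (l - B); set c := phi * (l - r); set d := phi * (l - 1).
move=> eA eB eC eD /andP [pB0 pB1] /andP [pD0 pD1] /andP [pC0 pC1] /andP [pA0 pA1].
have ha : a <= 0 by lra.
have hb : 0 <= b by lra.
have hc : c <= 0 by lra.
have hd : 0 <= d by lra.
rewrite /a /b /c /d in ha hb hc hd.
have BA : B <= r.
  rewrite /B ler_pdivrMr ?ltr0n // ?lt0n // ler_pM2l //; rewrite lerBlDr lerDl ler0n //.
have A1 : 1 <= A.
  rewrite /A lerDr; apply: divr_ge0; last by rewrite ler0n.
  apply: mulr_ge0; [lra | by rewrite ler0n].
have [phip|phin] := ltP 0 phi.
  apply/andP; split.
    by move: hb; rewrite pmulr_rge0 // subr_ge0.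
  by move: ha; rewrite pmulr_rle0 // subr_le0.
have phin' : phi < 0 by rewrite lt_neqAle phi0 phin.
apply/andP; split.
  move: hc; rewrite nmulr_rle0 // subr_ge0 => h; lra.
move: hd; rewrite nmulr_rge0 // subr_le0 => h; lra.
Qed.
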